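(* Assume $\mu\le0$. Then the function $$v(y)=\int_0^y\Big\{\frac{\kappa_A(u)}{G\big(\kappa_A(u)/A\big)}+AF\Big(G\Big(\frac{\kappa_A(u)}{A}\Big)\Big)\Big\}\,du,\qquad 0\le y<\bar\delta_A,$$ (where the integrand at $u=0$ is defined by continuity, equal to $0$) is continuously differentiable on $[0,\bar\delta_A)$ and is a classical solution of the Hamilton–Jacobi–Bellman equation $$\kappa_A(y)+\inf_{x\ge0}\{AxF(x)-xv'(y)\}=0,\qquad y\in[0,\bar\delta_A),$$ with boundary condition $v(0)=0$; moreover the infimum is attained at $x^*=G(\kappa_A(y)/A)$.
   Context: $L$ is a one-dimensional, non-trivial Lévy process such that $L_1$ has finite second moment and the set $\{\delta<0:\mathbb E[e^{\delta L_1}]<\infty\}$ is non-empty; it has the decomposition $L_t=\mu t+\sigma W_t+\int_{\mathbb R}x\,(N(t,dx)-t\nu(dx))$ with $\mu\in\mathbb R$ the drift. Let $\bar\delta=\inf\{\delta<0:\mathbb E[e^{\delta L_1}]<\infty\}$, $A>0$, $\bar\delta_A=-\bar\delta/A$, $\kappa(x)=\ln\mathbb E[e^{xL_1}]$ and $\kappa_A(x)=\kappa(-Ax)$ for $x\in[0,\bar\delta_A)$ (when $\mu\le 0$, $\kappa_A\ge0$). $F:[0,\infty)\to[0,\infty)$ satisfies (i) $F\in C([0,\infty))\cap C^1((0,\infty))$; (ii) $F(0)=0$; (iii) $x\mapsto xF(x)$ is strictly convex on $[0,\infty)$; (iv) $x\mapsto x^2F'(x)$ is strictly increasing on $(0,\infty)$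 and tends to $\infty$ as $x\to\infty$. $G:[0,\infty)\to[0,\infty)$ is the inverse of $x\mapsto x^2F'(x)$, with $G(0)=0$. *)

(* Defs.v *)
From Stdlib Require Import Reals Lra.
Open Scope R_scope.

(* Upper end of the domain [0, dA): None encodes +infinity
   (the case bar_delta = -infinity), Some b a finite bound b. *)
Definition below (y : R) (dA : option R) : Prop :=
  match dA with None => True | Some b => y < b end.

Definition in_dom (y : R) (dA : option R) : Prop := 0 <= y /\ below y dA.

Definition strictly_convex_nonneg (h : R -> R) : Prop :=
  forall x y t, 0 <= x -> 0 <= y -> x <> y -> 0 < t < 1 ->
    h (t * x + (1 - t) * y) < t * h x + (1 - t) * h y.

Definition integrand (kA F G : R -> R) (A u : R) : R :=
  if Req_EM_T u 0 then 0
  else kA u / G (kA u / A) + A * F (G (kA u / A)).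

(* Main.v *)
Require Import Defs.
From Stdlib Require Import Reals.
From Stdlib Require Import Lra Psatz.
From Coquelicot Require Import Coquelicot.
Open Scope R_scope.


Lemma cont_eps f x : continuity_pt f x -> forall eps, 0 < eps ->
  exists d, 0 < d /\ forall z, Rabs (z - x) < d -> Rabs (f z - f x) < eps.
Proof.
  intros H eps He. unfold continuity_pt, continue_in, limit1_in, limit_in in H.
  destruct (H eps He) as [d [Hd H1]]. exists d; split; auto.
  intros z Hz. destruct (Req_dec z x) as [->|Hne].
  - rewrite Rminus_diag, Rabs_R0; auto.
  - apply H1. split. split; auto. exact I. simpl. unfold R_dist. auto.
Qed.

Lemma eps_cont f x : (forall eps, 0 < eps ->
  exists d, 0 < d /\ forall z, Rabs (z - x) < d -> Rabs (f z - f x) < eps) -> continuity_pt f x.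
Proof.
  intros H. unfold continuity_pt, continue_in, limit1_in, limit_in.
  intros eps He. destruct (H eps He) as [d [Hd H1]]. exists d; split; auto.
  intros z [_ Hz]. simpl in *. unfold R_dist in *. auto.
Qed.

Definition sconv (h : R -> R) : Prop :=
  forall x y t, 0 <= x -> 0 <= y -> x <> y -> 0 < t < 1 ->
    h (t * x + (1 - t) * y) < t * h x + (1 - t) * h y.

Lemma tangent (h : R -> R) d x0 x : sconv h -> 0 <= x0 -> 0 <= x ->
  derivable_pt_lim h x0 d -> h x0 + d * (x - x0) <= h x.
Proof.
  intros Hc H0 Hx Hd.
  destruct (Req_dec x x0) as [->|Hne]. { lra. }
  destruct (Rle_or_lt (h x0 + d * (x - x0)) (h x)) as [ok|bad]; auto.
  exfalso.
  set (D := h x0 + d * (x - x0) - h x).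
  assert (HD : 0 < D) by (unfold D; lra).
  assert (Ha : 0 < Rabs (x - x0)) by (apply Rabs_pos_lt; lra).
  destruct (Hd (D / Rabs (x - x0))) as [del Hdel].
  { apply Rdiv_lt_0_compat; auto. }
  set (t := Rmin (1/2) (del / (2 * Rabs (x - x0)))).
  assert (Ht1 : 0 < t).
  { unfold t. apply Rmin_glb_lt. lra. apply Rdiv_lt_0_compat. apply (cond_pos del). lra. }
  assert (Ht2 : t < 1) by (unfold t; pose proof (Rmin_l (1/2) (del / (2 * Rabs (x - x0)))); lra).
  assert (Ht3 : t * Rabs (x - x0) < del).
  { assert (t <= del / (2 * Rabs (x - x0))) by apply Rmin_r.
    apply Rle_lt_trans with (del / (2 * Rabs (x - x0)) * Rabs (x - x0)).
    apply Rmult_le_compat_r; lra.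
    replace (del / (2 * Rabs (x - x0)) * Rabs (x - x0)) with (del/2) by (field; lra).
    pose proof (cond_pos del); lra. }
  set (s := t * (x - x0)).
  assert (Hs0 : s <> 0). { unfold s. apply Rmult_integral_contrapositive; split; lra. }
  assert (Hsa : Rabs s = t * Rabs (x - x0)).
  { unfold s. rewrite Rabs_mult, Rabs_pos_eq; lra. }
  assert (Hs : Rabs s < del) by lra.
  specialize (Hdel s Hs0 Hs).
  assert (Hcv := Hc x x0 t Hx H0 Hne (conj Ht1 Ht2)).
  replace (t * x + (1 - t) * x0) with (x0 + s) in Hcv by (unfold s; ring).
  assert (Hq : Rabs (h (x0 + s) - h x0 - d * s) < D / Rabs (x - x0) * Rabs s).
  { replace (h (x0 + s) - h x0 - d * s) with (s * ((h (x0 + s) - h x0) / s - d)) by (field; auto).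
    rewrite Rabs_mult, Rmult_comm. apply Rmult_lt_compat_r. apply Rabs_pos_lt; auto. auto. }
  rewrite Hsa in Hq.
  replace (D / Rabs (x - x0) * (t * Rabs (x - x0))) with (t * D) in Hq by (field; lra).
  apply Rabs_def2 in Hq. destruct Hq as [_ Hq].
  unfold D, s in *. nra.
Qed.

Lemma hder F Fd x : derivable_pt_lim F x Fd ->
  derivable_pt_lim (fun u => u * F u) x (F x + x * Fd).
Proof.
  intros H. pose proof (derivable_pt_lim_mult (fun u => u) F x 1 Fd (derivable_pt_lim_id x) H) as K.
  replace (F x + x * Fd) with (1 * F x + x * Fd) by ring. exact K.
Qed.

Section FL.
Variables (F F' : R -> R).
Hypothesis hFnn : forall x, 0 <= x -> 0 <= F x.
Hypothesis hFder : forall x, 0 < x -> derivable_pt_lim F x (F' x).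
Hypothesis hF0 : F 0 = 0.
Hypothesis hFconv : sconv (fun x => x * F x).

Lemma tanF x0 x : 0 < x0 -> 0 <= x ->
  x0 * F x0 + (F x0 + x0 * F' x0) * (x - x0) <= x * F x.
Proof.
  intros H0 Hx. apply (tangent (fun u => u * F u)); auto; try lra.
  apply hder; auto.
Qed.

Lemma posF' x : 0 < x -> 0 < x ^ 2 * F' x.
Proof.
  intros Hx. pose proof (tanF x (x/2) Hx ltac:(lra)) as T.
  pose proof (hFconv 0 x (1/2) (Rle_refl 0) ltac:(lra) ltac:(lra) ltac:(lra)) as C.
  simpl in C. rewrite hF0 in C.
  replace (1 / 2 * 0 + (1 - 1 / 2) * x) with (x/2) in C by field.
  nra.
Qed.

Lemma xF'le x : 0 < x -> x * F' x <= 2 * F (2 * x).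
Proof.
  intros Hx. pose proof (tanF x (2*x) Hx ltac:(lra)) as T.
  pose proof (hFnn x ltac:(lra)). nra.
Qed.

Lemma hjbF A k xs x : 0 < A -> 0 < xs -> xs ^ 2 * F' xs = k / A -> 0 <= x ->
  0 <= k + (A * x * F x - x * (k / xs + A * F xs)).
Proof.
  intros HA Hxs Hk Hx.
  assert (k = A * (xs ^ 2 * F' xs)) by (rewrite Hk; field; lra).
  assert (E : k / xs = A * xs * F' xs) by (subst k; field; lra).
  rewrite E. pose proof (tanF xs x Hxs Hx). subst k. nra.
Qed.
End FL.

Section GL.
Variables (F F' G : R -> R).
Hypothesis hFnn : forall x, 0 <= x -> 0 <= F x.
Hypothesis hFder : forall x, 0 < x -> derivable_pt_lim F x (F' x).
Hypothesis hF0 : F 0 = 0.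
Hypothesis hFconv : sconv (fun x => x * F x).
Hypothesis hFinc : forall x y, 0 < x -> x < y -> x ^ 2 * F' x < y ^ 2 * F' y.
Hypothesis hGinv1 : forall x, 0 < x -> G (x ^ 2 * F' x) = x.
Hypothesis hGinv2 : forall y, 0 < y -> 0 < G y /\ (G y) ^ 2 * F' (G y) = y.

Lemma Gmono a b : 0 < a -> a < b -> G a < G b.
Proof.
  intros Ha Hab. destruct (hGinv2 a Ha) as [Ga Ea]. destruct (hGinv2 b ltac:(lra)) as [Gb Eb].
  destruct (Rlt_or_le (G a) (G b)) as [ok|H]; auto. exfalso.
  destruct (Req_dec (G a) (G b)) as [E|Ne].
  - rewrite E in Ea. lra.
  - assert (G b < G a) by lra. pose proof (hFinc _ _ Gb H0). lra.
Qed.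

Lemma G0lim eps : 0 < eps -> exists d, 0 < d /\ forall y, 0 < y < d -> G y < eps.
Proof.
  intros He. exists ((eps/2)^2 * F' (eps/2)). split.
  - apply (posF' F F'); auto; lra.
  - intros y [Hy1 Hy2]. pose proof (Gmono _ _ Hy1 Hy2). rewrite hGinv1 in H; lra.
Qed.

Lemma Gcont c : 0 < c -> forall eps, 0 < eps -> exists d, 0 < d /\
  forall y, 0 < y -> Rabs (y - c) < d -> Rabs (G y - G c) < eps.
Proof.
  intros Hc eps He. destruct (hGinv2 c Hc) as [G0 Ec].
  set (e := Rmin eps (G c) / 2).
  assert (He1 : 0 < e) by (unfold e; pose proof (Rmin_glb_lt _ _ _ He G0); lra).
  assert (He2 : e < eps) by (unfold e; pose proof (Rmin_l eps (G c)); lra).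
  assert (He3 : e < G c) by (unfold e; pose proof (Rmin_r eps (G c)); lra).
  set (x1 := G c - e). set (x2 := G c + e).
  set (y1 := x1 ^ 2 * F' x1). set (y2 := x2 ^ 2 * F' x2).
  assert (Hy1 : y1 < c) by (rewrite <- Ec; apply hFinc; unfold x1; lra).
  assert (Hy2 : c < y2) by (rewrite <- Ec; apply hFinc; unfold x2; lra).
  assert (Hy1p : 0 < y1) by (apply (posF' F F'); auto; unfold x1; lra).
  exists (Rmin (c - y1) (y2 - c)). split.
  - apply Rmin_glb_lt; lra.
  - intros y Hy Hd. pose proof (Rmin_l (c - y1) (y2 - c)). pose proof (Rmin_r (c - y1) (y2 - c)).
    apply Rabs_def2 in Hd. destruct Hd.
    pose proof (Gmono y1 y Hy1p ltac:(lra)). pose proof (Gmono y y2 Hy ltac:(lra)).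
    unfold y1, y2 in *. rewrite hGinv1 in H3 by (unfold x1; lra).
    rewrite hGinv1 in H4 by (unfold x2; lra).
    apply Rabs_def1; unfold x1, x2 in *; lra.
Qed.
End GL.

Ltac spec H := repeat match type of H with forall _ : ?P, _ => match type of P with Prop => specialize (H ltac:(assumption)) end end.

Theorem mainTheorem8
  (A : R) (dA : option R) (kA : R -> R) (F F' G : R -> R)
  (* A > 0 and bar_delta_A = - bar_delta / A in (0, +infinity] *)
  (hA : 0 < A)
  (hdA : forall b, dA = Some b -> 0 < b)
  (* properties of kappa_A(x) = kappa(-A x) on [0, bar_delta_A)
     used in place of the Levy-process definition (see NOTES.md) *)
  (hk0 : kA 0 = 0)
  (hkpos : forall u, in_dom u dA -> 0 < u -> 0 < kA u)
  (hkcont : forall u, in_dom u dA -> forall eps, 0 < eps ->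
     exists delta, 0 < delta /\ forall z, in_dom z dA -> Rabs (z - u) < delta ->
       Rabs (kA z - kA u) < eps)
  (* (i) F continuous on [0,oo), C^1 on (0,oo), F >= 0 *)
  (hFnn : forall x, 0 <= x -> 0 <= F x)
  (hFcont : forall x, 0 <= x -> forall eps, 0 < eps ->
     exists delta, 0 < delta /\ forall z, 0 <= z -> Rabs (z - x) < delta ->
       Rabs (F z - F x) < eps)
  (hFder : forall x, 0 < x -> derivable_pt_lim F x (F' x))
  (hF'cont : forall x, 0 < x -> continuity_pt F' x)
  (* (ii) *)
  (hF0 : F 0 = 0)
  (* (iii) *)
  (hFconv : strictly_convex_nonneg (fun x => x * F x))
  (* (iv) *)
  (hFinc : forall x y, 0 < x -> x < y -> x ^ 2 * F' x < y ^ 2 * F' y)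
  (hFinf : forall M, exists x0, 0 < x0 /\ forall x, x0 <= x -> M <= x ^ 2 * F' x)
  (* G : [0,oo) -> [0,oo) inverse of x |-> x^2 F'(x), G(0) = 0 *)
  (hG0 : G 0 = 0)
  (hGinv1 : forall x, 0 < x -> G (x ^ 2 * F' x) = x)
  (hGinv2 : forall y, 0 < y -> 0 < G y /\ (G y) ^ 2 * F' (G y) = y) :
  let g := integrand kA F G A in
  exists v : R -> R,
    (* v(y) = int_0^y g(u) du on [0, bar_delta_A) *)
    (forall y, in_dom y dA -> inhabited (Riemann_integrable g 0 y)) /\
    (forall y (pr : Riemann_integrable g 0 y), in_dom y dA -> v y = RiemannInt pr) /\
    (* v is differentiable on [0, bar_delta_A) with v' = g
       (right derivative at 0) *)
    (forall y, in_dom y dA -> 0 < y -> derivable_pt_lim v y (g y)) /\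
    (forall eps, 0 < eps -> exists delta, 0 < delta /\
       forall h, 0 < h < delta -> Rabs ((v h - v 0) / h - g 0) < eps) /\
    (* v' = g is continuous on [0, bar_delta_A) *)
    (forall y, in_dom y dA -> forall eps, 0 < eps ->
       exists delta, 0 < delta /\ forall z, in_dom z dA -> Rabs (z - y) < delta ->
         Rabs (g z - g y) < eps) /\
    (* boundary condition *)
    v 0 = 0 /\
    (* HJB: kA(y) + inf_{x>=0} {A x F(x) - x v'(y)} = 0, infimum attained
       at x* = G(kA(y)/A) *)
    (forall y, in_dom y dA ->
       0 <= G (kA y / A) /\
       (forall x, 0 <= x -> 0 <= kA y + (A * x * F x - x * g y)) /\
       kA y + (A * G (kA y / A) * F (G (kA y / A)) - G (kA y / A) * g y) = 0).
Proof.
  intros g. unfold in_dom in *.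
  assert (hc : sconv (fun x => x * F x)) by exact hFconv.
  pose proof (Gcont F F' G) as GC. spec GC.
  pose proof (G0lim F F' G) as G0L. spec G0L.
  pose proof (xF'le F F') as XFL. spec XFL.
  pose proof (posF' F F') as PF. spec PF.
  pose proof (hjbF F F') as HJ. spec HJ.
  assert (g0 : g 0 = 0).
  { unfold g, integrand. destruct (Req_EM_T 0 0); [reflexivity|congruence]. }
  assert (gform : forall z, in_dom z dA -> 0 < z ->
    0 < G (kA z / A) /\ (G (kA z / A)) ^ 2 * F' (G (kA z / A)) = kA z / A /\
    g z = A * (G (kA z / A) * F' (G (kA z / A)) + F (G (kA z / A)))).
  { intros z Hz Hz0. pose proof (hkpos z Hz Hz0) as Hk.
    destruct (hGinv2 (kA z / A)) as [Gp GE]. { apply Rdiv_lt_0_compat; lra. }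
    split; [auto|split; [auto|]].
    unfold g, integrand. destruct (Req_EM_T z 0) as [e|_]; [lra|].
    set (x := G (kA z / A)) in *.
    assert (kA z = A * (x ^ 2 * F' x)) by (rewrite GE; field; lra).
    rewrite H. field. repeat split; lra. }
  assert (dsub : forall y z, in_dom y dA -> 0 <= z <= y -> in_dom z dA).
  { intros y z [Hy1 Hy2] Hz. split; [lra|]. destruct dA; simpl in *; auto; lra. }
  assert (gcont : forall y, in_dom y dA -> forall eps, 0 < eps ->
       exists delta, 0 < delta /\ forall z, in_dom z dA -> Rabs (z - y) < delta ->
         Rabs (g z - g y) < eps).
  { intros y Hy eps He. destruct Hy as [Hy0 Hyb].
    destruct (Rle_lt_or_eq_dec 0 y Hy0) as [Hyp|Hy00].
    -
      destruct (gform y (conj Hy0 Hyb) Hyp) as [xp [xE gE]].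
      set (xs := G (kA y / A)) in *.
      assert (Cphi : continuity_pt (fun x => A * (x * F' x + F x)) xs).
      { apply (continuity_pt_mult (fun _ => A) (fun x => x * F' x + F x)).
        apply continuity_pt_const; intros a b; reflexivity.
        apply (continuity_pt_plus (fun x => x * F' x) F).
        apply (continuity_pt_mult (fun x => x) F'). apply continuity_pt_id. apply hF'cont; auto.
        apply derivable_continuous_pt. exists (F' xs). apply hFder; auto. }
      destruct (cont_eps _ _ Cphi eps He) as [d1 [Hd1 H1]].
      assert (Hc : 0 < kA y / A) by (apply Rdiv_lt_0_compat; [apply hkpos; [split|]|]; auto).
      destruct (GC _ Hc d1 Hd1) as [d2 [Hd2 H2]].
      destruct (hkcont y (conj Hy0 Hyb) (A * d2)) as [d3 [Hd3 H3]]. { nra. }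
      exists (Rmin d3 y). split. { apply Rmin_glb_lt; auto. }
      intros z Hz Hzy. pose proof (Rmin_l d3 y). pose proof (Rmin_r d3 y).
      assert (Hzp : 0 < z) by (apply Rabs_def2 in Hzy; lra).
      destruct (gform z Hz Hzp) as [zp [zE gzE]].
      rewrite gzE, gE. apply H1. fold xs. apply H2.
      + apply Rdiv_lt_0_compat; [apply hkpos|]; auto.
      + replace (kA z / A - kA y / A) with ((kA z - kA y) / A) by (field; lra).
        unfold Rdiv. rewrite Rabs_mult, Rabs_inv, (Rabs_pos_eq A) by lra.
        apply (Rmult_lt_reg_r A); [lra|]. rewrite Rmult_assoc, Rinv_l, Rmult_1_r by lra.
        rewrite Rmult_comm. apply H3; auto. lra.
    -
      subst y. rewrite g0.
      set (e' := eps / (3 * A)).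
      assert (He' : 0 < e') by (unfold e'; apply Rdiv_lt_0_compat; lra).
      destruct (hFcont 0 (Rle_refl 0) e' He') as [dF [HdF HF]].
      destruct (G0L (dF/2)) as [dG [HdG HG]]. { lra. }
      destruct (hkcont 0 (conj Hy0 Hyb) (A * dG)) as [dk [Hdk Hk]]. { nra. }
      exists dk. split; auto. intros z Hz Hzd.
      destruct (Rle_lt_or_eq_dec 0 z (proj1 Hz)) as [Hzp|Hz0].
      + destruct (gform z Hz Hzp) as [xp [xE gE]]. rewrite gE.
        set (x := G (kA z / A)) in *.
        pose proof (hkpos z Hz Hzp) as Kp.
        assert (Hk' := Hk z Hz Hzd). rewrite hk0, Rminus_0_r, Rabs_pos_eq in Hk' by lra.
        assert (Hx : x < dF / 2).
        { apply HG. split. apply Rdiv_lt_0_compat; lra.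
          apply (Rmult_lt_reg_r A); [lra|]. unfold Rdiv. rewrite Rmult_assoc, Rinv_l by lra. lra. }
        assert (F1 : F x < e').
        { pose proof (HF x ltac:(lra) ltac:(rewrite Rminus_0_r, Rabs_pos_eq; lra)) as K.
          rewrite hF0, Rminus_0_r, Rabs_pos_eq in K by (apply hFnn; lra). auto. }
        assert (F2 : F (2 * x) < e').
        { pose proof (HF (2 * x) ltac:(lra) ltac:(rewrite Rminus_0_r, Rabs_pos_eq; lra)) as K.
          rewrite hF0, Rminus_0_r, Rabs_pos_eq in K by (apply hFnn; lra). auto. }
        pose proof (XFL x xp) as L.
        pose proof (PF x xp) as P.
        assert (0 < x * F' x) by (apply (Rmult_lt_reg_l x); [lra|]; nra).
        pose proof (hFnn x ltac:(lra)).
        rewrite Rminus_0_r, Rabs_pos_eq by nra.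
        assert (eps = A * (3 * e')) by (unfold e'; field; lra). nra.
      + subst z. rewrite g0, Rminus_diag, Rabs_R0. auto. }
  assert (exI : forall y, in_dom y dA -> ex_RInt g 0 y).
  { intros y Hy.
    set (c := fun w => Rmax 0 (Rmin y w)).
    apply (ex_RInt_ext (fun w => g (c w))).
    { intros x Hx. rewrite Rmin_left in Hx by (apply (proj1 Hy)). rewrite Rmax_right in Hx by apply (proj1 Hy).
      unfold c. rewrite Rmin_right by lra. rewrite Rmax_right by lra. reflexivity. }
    apply (ex_RInt_continuous (V:=R_CompleteNormedModule)). intros z _.
    apply continuity_pt_filterlim. apply eps_cont. intros eps He.
    assert (cin : forall w, in_dom (c w) dA).
    { intros w. apply (dsub y); auto. unfold c. split. apply Rmax_l.
      apply Rmax_lub. apply (proj1 Hy). apply Rmin_l. }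
    destruct (gcont (c z) (cin z) eps He) as [d [Hd H]].
    exists d. split; auto. intros w Hw. apply H; auto.
    assert (Lip : Rabs (c w - c z) <= Rabs (w - z)).
    { unfold c. unfold Rmax, Rmin. repeat destruct Rle_dec; apply Rabs_le; split;
      try (apply Rabs_def2 in Hw); pose proof (Rle_abs (w - z)); pose proof (Rle_abs (-(w - z)));
      rewrite Rabs_Ropp in *; lra. }
    lra. }
  exists (fun y => RInt g 0 y).
  split; [|split; [|split; [|split; [|split; [|split]]]]].
  - intros y Hy. constructor. apply ex_RInt_Reals_0. auto.
  - intros y pr Hy. apply RInt_Reals.
  - intros y Hy Hyp. apply is_derive_Reals. apply (is_derive_RInt (V:=R_NormedModule) g (fun y => RInt g 0 y) 0 y).
    + set (r := match dA with None => y | Some b => Rmin y (b - y) end).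
      assert (Hr : 0 < r).
      { unfold r. destruct Hy as [_ Hb]. destruct dA; simpl in Hb; auto. apply Rmin_glb_lt; lra. }
      exists (mkposreal r Hr). intros z Hz. apply (RInt_correct (V:=R_CompleteNormedModule)). apply exI.
      change (Rabs (z - y) < r) in Hz. apply Rabs_def2 in Hz.
      unfold r in Hz. destruct Hy as [_ Hb]. split.
      * destruct dA; [pose proof (Rmin_l y (r0 - y))|]; lra.
      * destruct dA; simpl in *; auto. pose proof (Rmin_r y (r0 - y)); lra.
    + apply continuity_pt_filterlim. apply eps_cont. intros eps He.
      destruct (gcont y Hy eps He) as [d [Hd H]].
      set (r := match dA with None => y | Some b => Rmin y (b - y) end).
      assert (Hr : 0 < r).
      { unfold r. destruct Hy as [_ Hb]. destruct dA; simpl in Hb; auto. apply Rmin_glb_lt; lra. }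
      exists (Rmin d r). split. apply Rmin_glb_lt; auto.
      intros z Hz. pose proof (Rmin_l d r). pose proof (Rmin_r d r). apply H. 2: lra.
      apply Rabs_def2 in Hz.
      unfold r in *. destruct Hy as [_ Hb]. split.
      * destruct dA; [pose proof (Rmin_l y (r0 - y))|]; lra.
      * destruct dA; simpl in *; auto. pose proof (Rmin_r y (r0 - y)); lra.
  - intros eps He.
    assert (H0d : 0 <= 0 /\ below 0 dA).
    { split. lra. destruct dA; simpl; auto. }
    destruct (gcont 0 H0d (eps/2)) as [d [Hd H]]. lra.
    set (r := match dA with None => d | Some b => Rmin d b end).
    assert (Hr : 0 < r).
    { unfold r. destruct dA; auto. apply Rmin_glb_lt; auto. }
    exists r. split; auto. intros h Hh.
    assert (hin : forall z, 0 <= z <= h -> (0 <= z /\ below z dA) /\ Rabs (z - 0) < d).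
    { intros z Hz. unfold r in Hh. split. split. lra. destruct dA; simpl; auto.
      pose proof (Rmin_r d r0); lra.
      rewrite Rminus_0_r, Rabs_pos_eq by lra. destruct dA; [pose proof (Rmin_l d r0)|]; lra. }
    assert (Hex : ex_RInt g 0 h) by (apply exI; apply hin; lra).
    pose proof (abs_RInt_le_const g 0 h (eps/2) ltac:(lra) Hex) as K.
    assert (K' : Rabs (RInt g 0 h) <= (h - 0) * (eps / 2)).
    { apply K. intros t Ht. destruct (hin t Ht) as [A1 A2]. pose proof (H t A1 A2).
      rewrite g0, Rminus_0_r in H0. lra. }
    assert (Z : RInt g 0 0 = 0) by (rewrite RInt_point; reflexivity). rewrite Z, g0.
    replace ((RInt g 0 h - 0) / h - 0) with (RInt g 0 h / h) by (field; lra).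
    unfold Rdiv. rewrite Rabs_mult, Rabs_inv, (Rabs_pos_eq h) by lra.
    apply (Rmult_lt_reg_r h); [lra|]. rewrite Rmult_assoc, Rinv_l, Rmult_1_r by lra. nra.
  - exact gcont.
  - rewrite RInt_point; reflexivity.
  - intros y Hy. destruct Hy as [Hy0 Hyb].
    destruct (Rle_lt_or_eq_dec 0 y Hy0) as [Hyp|Hy00].
    + destruct (gform y (conj Hy0 Hyb) Hyp) as [xp [xE gE]].
      set (xs := G (kA y / A)) in *.
      assert (gE' : g y = kA y / xs + A * F xs).
      { unfold g, integrand. destruct (Req_EM_T y 0); [lra|]. reflexivity. }
      split; [lra|split].
      * intros x Hx. rewrite gE'. apply HJ; auto.
      * rewrite gE'. field. lra.
    + subst y. rewrite hk0, g0. unfold Rdiv. rewrite Rmult_0_l, hG0, hF0. split; [lra|split].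
      * intros x Hx. pose proof (hFnn x Hx). assert (0 <= A*x*F x) by (apply Rmult_le_pos; [apply Rmult_le_pos|]; lra). lra.
      * ring.
Qed.
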